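(* For all $0\le t<1$, $$\lim_{x\uparrow B^*\sqrt{1-t}}\frac{\partial}{\partial x}J^*(t,x)=\lim_{x\downarrow B^*\sqrt{1-t}}\frac{\partial}{\partial x}g(t,x),$$ $$\lim_{x\downarrow -B^*\sqrt{1-t}}\frac{\partial}{\partial x}J^*(t,x)=\lim_{x\uparrow -B^*\sqrt{1-t}}\frac{\partial}{\partial x}g(t,x),$$ where $$J^*(t,x)=\begin{cases}(1-t)^{n+1/2}(F_{2n+1}+G_{2n+1})(x/\sqrt{1-t})\,j(B^* ), & |x|<B^*\sqrt{1-t},\\ g(t,x), & |x|\ge B^*\sqrt{1-t}.\end{cases}$$
   Context: $n\ge0$ is an integer. $F_q(y):=\int_0^\infty u^{q-1}e^{yu-u^2/2}\,\mathrm{d}u$ and $G_q(y):=F_q(-y)$. $B^*>0$ is the unique zero of $B\mapsto(2n+1)-BF'_{2n+1}(B)/F_{2n+1}(B)$. $U(t,x)=(1-t)^{n+1/2}(B^* )^{2n+1}F_{2n+1}(x/\sqrt{1-t})/F_{2n+1}(B^* )$ if $x<B^*\sqrt{1-t}$, and $U(t,x)=x^{2n+1}$ otherwise. $g(t,x):=(U(t,x)-x^{2n+1})1_{\{x\le0\}}+(U(t,-x)+x^{2n+1})1_{\{x>0\}}$. $j(D):=\frac{1}{(F_{2n+1}+G_{2n+1})(D)}[D^{2n+1}+(B^* )^{2n+1}G_{2n+1}(D)/F_{2n+1}(B^* )]$. *)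

(* Defs.v *)
From Stdlib Require Import Reals.
From Coquelicot Require Import Coquelicot.
Open Scope R_scope.

Definition Fq (q : nat) (y : R) : R :=
  RInt_gen (fun u => u ^ (q - 1) * exp (y * u - u ^ 2 / 2))
           (at_point 0) (Rbar_locally p_infty).

Definition Gq (q : nat) (y : R) : R := Fq q (- y).

(* B* is characterised by: B* > 0 and (2n+1) - B F'_{2n+1}(B)/F_{2n+1}(B) = 0 *)
Definition Bstar_eq (n : nat) (B : R) : R :=
  INR (2 * n + 1) - B * Derive (Fq (2 * n + 1)) B / Fq (2 * n + 1) B.

Definition U (n : nat) (Bs t x : R) : R :=
  if Rlt_dec x (Bs * sqrt (1 - t)) then
    Rpower (1 - t) (INR n + / 2) * Bs ^ (2 * n + 1)
      * Fq (2 * n + 1) (x / sqrt (1 - t)) / Fq (2 * n + 1) Bs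
  else x ^ (2 * n + 1).

Definition g (n : nat) (Bs t x : R) : R :=
  if Rle_dec x 0 then U n Bs t x - x ^ (2 * n + 1)
  else U n Bs t (- x) + x ^ (2 * n + 1).

Definition j (n : nat) (Bs D : R) : R :=
  / (Fq (2 * n + 1) D + Gq (2 * n + 1) D)
  * (D ^ (2 * n + 1) + Bs ^ (2 * n + 1) * Gq (2 * n + 1) D / Fq (2 * n + 1) Bs).

Definition Jstar (n : nat) (Bs t x : R) : R :=
  if Rlt_dec (Rabs x) (Bs * sqrt (1 - t)) then
    Rpower (1 - t) (INR n + / 2)
      * (Fq (2 * n + 1) (x / sqrt (1 - t)) + Gq (2 * n + 1) (x / sqrt (1 - t)))
      * j n Bs Bs
  else g n Bs t x.

(* Main.v *)
Require Import Defs.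
From Stdlib Require Import Reals Lra Lia IndefiniteDescription.
From Coquelicot Require Import Coquelicot.
Open Scope R_scope.

Lemma mono_lim (G : R -> R) (B : R) :
  (forall x y, 0 <= x -> x <= y -> G x <= G y) ->
  (forall x, 0 <= x -> G x <= B) ->
  exists L, filterlim G (Rbar_locally p_infty) (locally L).
Proof.
  intros Hm Hb.
  set (E := fun r => exists x, 0 <= x /\ r = G x).
  assert (HE : bound E) by (exists B; intros r [x [Hx ->]]; now apply Hb).
  assert (HE0 : exists r, E r) by (exists (G 0); exists 0; split; [lra|reflexivity]).
  destruct (completeness E HE HE0) as [L [HL1 HL2]].
  exists L. intros P [eps HP].
  assert (Hx0 : exists x0, 0 <= x0 /\ L - eps < G x0).
  { destruct (Classical_Prop.classic (exists x0, 0 <= x0 /\ L - eps < G x0)) as [H|H]; [exact H|].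
    exfalso. assert (L <= L - eps).
    { apply HL2. intros r [x [Hx ->]]. destruct (Rle_dec (G x) (L - eps)) as [h|h]; [exact h|].
      exfalso; apply H; exists x; split; [exact Hx| lra]. }
    destruct eps; simpl in *; lra. }
  destruct Hx0 as [x0 [Hx0 Hlt]].
  exists x0. intros x Hx. apply HP.
  assert (G x0 <= G x) by (apply Hm; lra).
  assert (G x <= L) by (apply HL1; exists x; split; [lra|reflexivity]).
  change (Rabs (G x - L) < eps). apply Rabs_lt_between'. lra.
Qed.

Lemma gen_of_lim (f : R -> R) (a l : R) :
  (forall b, ex_RInt f a b) ->
  filterlim (fun b => RInt f a b) (Rbar_locally p_infty) (locally l) ->
  is_RInt_gen f (at_point a) (Rbar_locally p_infty) l.
Proof.
  intros Hex Hl. unfold is_RInt_gen.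
  apply filterlimi_lim_ext_loc with (f := fun ab => RInt f (fst ab) (snd ab)).
  - exists (fun x => x = a) (fun _ => True). reflexivity. exists 0; auto.
    intros x y -> _. simpl. exact (RInt_correct f _ _ (Hex y)).
  - intros P HP. specialize (Hl P HP).
    exists (fun x => x = a) (fun b => P (RInt f a b)). reflexivity. exact Hl.
    intros x y -> Hy. exact Hy.
Qed.

Lemma exp_le' x y : x <= y -> exp x <= exp y.
Proof. intros [H|H]; [left; now apply exp_increasing| subst; lra]. Qed.

Definition phi (k : nat) (v : R) : R := v ^ k * exp (- (v ^ 2) / 2).

Lemma phi_cont k x : continuous (phi k) x.
Proof. apply (ex_derive_continuous (phi k)). unfold phi. auto_derive. auto. Qed.

Lemma phi_exRInt k a b : ex_RInt (phi k) a b.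
Proof. apply (ex_RInt_continuous (V:=R_CompleteNormedModule)). intros; apply phi_cont. Qed.

Lemma pow_le_exp k v : 0 <= v -> v ^ k <= INR (Factorial.fact k) * exp v.
Proof.
  intros Hv. pose proof (exp_ge_taylor v k Hv) as H.
  assert (Hf : 0 < INR (Factorial.fact k)) by (apply lt_0_INR, Factorial.lt_O_fact).
  assert (v ^ k / INR (Factorial.fact k) <= exp v).
  { eapply Rle_trans; [|exact H]. destruct k as [|k].
    - simpl. lra.
    - simpl. assert (0 <= sum_f_R0 (fun k0 : nat => v ^ k0 / INR (Factorial.fact k0)) k).
      { apply cond_pos_sum. intros i. apply Rmult_le_pos; [apply pow_le; auto|].
        left; apply Rinv_0_lt_compat, lt_0_INR, Factorial.lt_O_fact. }
      lra. }
  apply Rmult_le_reg_r with (/ INR (Factorial.fact k)). apply Rinv_0_lt_compat; auto.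
  replace (INR (Factorial.fact k) * exp v * / INR (Factorial.fact k)) with (exp v) by (field; lra).
  exact H0.
Qed.

Lemma phi_bound k v : 0 <= v -> phi k v <= INR (Factorial.fact k) * exp 2 * exp (- v).
Proof.
  intros Hv. unfold phi.
  apply Rle_trans with (INR (Factorial.fact k) * exp v * exp (- (v ^ 2) / 2)).
  { apply Rmult_le_compat_r; [left; apply exp_pos| now apply pow_le_exp]. }
  rewrite Rmult_assoc, Rmult_assoc, <- exp_plus, <- exp_plus.
  apply Rmult_le_compat_l; [apply pos_INR|]. apply exp_le'. replace (v^2) with (v*v) by ring. pose proof (Rle_0_sqr (v-2)). unfold Rsqr in *. lra.
Qed.

Lemma phi_nonneg k v : 0 <= v -> 0 <= phi k v.
Proof. intros; unfold phi; apply Rmult_le_pos; [apply pow_le; auto| left; apply exp_pos]. Qed.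

Lemma RInt_expneg K M : RInt (fun v => K * exp (- v)) 0 M = K - K * exp (- M).
Proof.
  apply is_RInt_unique.
  replace (K - K * exp (- M)) with (minus ((fun v => - K * exp (- v)) M) ((fun v => - K * exp (- v)) 0)).
  2:{ unfold minus, plus, opp; simpl. rewrite Ropp_0, exp_0. ring. }
  apply (is_RInt_derive (V:=R_CompleteNormedModule) (fun v => - K * exp (- v))).
  - intros x _. auto_derive; auto. ring.
  - intros x _. apply (ex_derive_continuous (K:=R_AbsRing) (V:=R_NormedModule)). auto_derive. auto.
Qed.

Lemma phi_lim k : exists L, filterlim (fun M => RInt (phi k) 0 M) (Rbar_locally p_infty) (locally L).
Proof.
  apply mono_lim with (B := INR (Factorial.fact k) * exp 2).
  - intros x y Hx Hxy. rewrite <- (RInt_Chasles (phi k) 0 x y) by apply phi_exRInt.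
    assert (0 <= RInt (phi k) x y).
    { apply RInt_ge_0; auto. apply phi_exRInt. intros z Hz; apply phi_nonneg; lra. }
    change (plus ?a ?b) with (a + b). lra.
  - intros x Hx. eapply Rle_trans.
    + apply RInt_le with (g := fun v => INR (Factorial.fact k) * exp 2 * exp (- v)); auto.
      apply phi_exRInt. apply (ex_RInt_continuous (V:=R_CompleteNormedModule)); intros; apply (ex_derive_continuous (K:=R_AbsRing) (V:=R_NormedModule)); auto_derive; auto.
      intros; apply phi_bound; lra.
    + rewrite RInt_expneg. assert (0 <= INR (Factorial.fact k) * exp 2 * exp (- x)).
      { apply Rmult_le_pos; [apply Rmult_le_pos; [apply pos_INR| left; apply exp_pos]| left; apply exp_pos]. }
      lra.
Qed.

Lemma ex_RInt_sum (f : nat -> R -> R) (N : nat) a b :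
  (forall k, ex_RInt (f k) a b) -> ex_RInt (fun u => sum_f_R0 (fun k => f k u) N) a b.
Proof.
  intros H. induction N as [|N IH]; simpl.
  - apply H.
  - apply (ex_RInt_plus (V:=R_CompleteNormedModule)); auto.
Qed.

Lemma RInt_sum (f : nat -> R -> R) (N : nat) a b :
  (forall k, ex_RInt (f k) a b) ->
  RInt (fun u => sum_f_R0 (fun k => f k u) N) a b = sum_f_R0 (fun k => RInt (f k) a b) N.
Proof.
  intros H. induction N as [|N IH]; simpl.
  - reflexivity.
  - rewrite <- IH. apply (RInt_plus (V:=R_CompleteNormedModule)); auto.
    now apply ex_RInt_sum.
Qed.

Lemma RInt_scal_R (f : R -> R) (c a b : R) :
  ex_RInt f a b -> RInt (fun x => c * f x) a b = c * RInt f a b.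
Proof. intros H. exact (RInt_scal f a b c H). Qed.

Lemma RInt_shift (f : R -> R) (y a b : R) :
  (forall x, continuous f x) ->
  RInt (fun u => f (u - y)) a b = RInt f (a - y) (b - y).
Proof.
  intros Hc.
  pose proof (RInt_comp_lin f 1 (- y) a b) as H.
  replace (1 * a + - y) with (a - y) in H by ring.
  replace (1 * b + - y) with (b - y) in H by ring.
  rewrite <- H. 2:{ apply (ex_RInt_continuous (V:=R_CompleteNormedModule)); auto. }
  apply RInt_ext. intros x _. change (scal 1 ?z) with (1 * z).
  rewrite Rmult_1_l. f_equal. ring.
Qed.

Lemma RInt_h n y M :
  RInt (fun u => u ^ (2 * n + 1 - 1) * exp (y * u - u ^ 2 / 2)) 0 M =
  exp (y ^ 2 / 2) * sum_f_R0 (fun k => Binomial.C (2 * n) k * y ^ (2 * n - k) *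
      (RInt (phi k) 0 (M - y) - RInt (phi k) 0 (- y))) (2 * n).
Proof.
  rewrite (RInt_ext _ (fun u => sum_f_R0 (fun k => (exp (y ^ 2 / 2) *
       (Binomial.C (2 * n) k * y ^ (2 * n - k))) * phi k (u - y)) (2 * n))).
  2:{ intros u _. replace (2 * n + 1 - 1)%nat with (2 * n)%nat by lia.
      replace (u ^ (2 * n)) with (((u - y) + y) ^ (2 * n)) by (f_equal; ring).
      rewrite binomial.
      replace (exp (y * u - u ^ 2 / 2)) with (exp (y ^ 2 / 2) * exp (- ((u - y) ^ 2) / 2))
        by (rewrite <- exp_plus; f_equal; field).
      rewrite Rmult_comm, scal_sum. apply sum_eq. intros i _. unfold phi. ring. }
  rewrite RInt_sum.
  2:{ intros k. apply (ex_RInt_continuous (V:=R_CompleteNormedModule)). intros z _.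
      apply (ex_derive_continuous (K:=R_AbsRing) (V:=R_NormedModule)). unfold phi. auto_derive. auto. }
  rewrite scal_sum. apply sum_eq. intros i _.
  rewrite RInt_scal_R.
  2:{ apply (ex_RInt_continuous (V:=R_CompleteNormedModule)). intros z _.
      apply (ex_derive_continuous (K:=R_AbsRing) (V:=R_NormedModule)). unfold phi. auto_derive. auto. }
  rewrite RInt_shift by apply phi_cont.
  rewrite <- (RInt_Chasles (phi i) 0 (0 - y) (M - y)) by apply phi_exRInt.
  change (plus ?a ?b) with (a + b). replace (0 - y) with (- y) by ring. ring.
Qed.

Definition Ck (k : nat) : R :=
  proj1_sig (constructive_indefinite_description _ (phi_lim k)).

Lemma Ck_spec k : filterlim (fun M => RInt (phi k) 0 M) (Rbar_locally p_infty) (locally (Ck k)).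
Proof. unfold Ck. destruct (constructive_indefinite_description _ (phi_lim k)). simpl. exact f. Qed.

Definition Fexpr (n : nat) (y : R) : R :=
  exp (y ^ 2 / 2) * sum_f_R0 (fun k => Binomial.C (2 * n) k * y ^ (2 * n - k) *
      (Ck k - RInt (phi k) 0 (- y))) (2 * n).

Lemma is_lim_sum (f : nat -> R -> R) (l : nat -> R) x N :
  (forall k, is_lim (f k) x (l k)) ->
  is_lim (fun M => sum_f_R0 (fun k => f k M) N) x (sum_f_R0 l N).
Proof.
  intros H. induction N as [|N IH]; simpl.
  - apply H.
  - apply is_lim_plus'; auto.
Qed.

Lemma Fq_eq n y : Fq (2 * n + 1) y = Fexpr n y.
Proof.
  unfold Fq. apply is_RInt_gen_unique. apply gen_of_lim.
  - intros b. apply (ex_RInt_continuous (V:=R_CompleteNormedModule)). intros z _.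
    apply (ex_derive_continuous (K:=R_AbsRing) (V:=R_NormedModule)). auto_derive. auto.
  - eapply filterlim_ext. { intros M. symmetry. apply RInt_h. }
    unfold Fexpr.
    assert (H : is_lim (fun M => exp (y ^ 2 / 2) * sum_f_R0 (fun k => Binomial.C (2 * n) k * y ^ (2 * n - k) *
      (RInt (phi k) 0 (M - y) - RInt (phi k) 0 (- y))) (2 * n)) p_infty
      (exp (y ^ 2 / 2) * sum_f_R0 (fun k => Binomial.C (2 * n) k * y ^ (2 * n - k) *
      (Ck k - RInt (phi k) 0 (- y))) (2 * n))).
    { apply (is_lim_scal_l _ (exp (y ^ 2 / 2)) p_infty (Finite _)).
      apply is_lim_sum. intros k.
      apply (is_lim_scal_l _ _ p_infty (Finite _)).
      apply is_lim_minus'; [|apply is_lim_const].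
      unfold is_lim. eapply filterlim_comp; [|apply Ck_spec].
      intros P [N HN]. exists (N + y). intros x Hx. apply HN. lra. }
    exact H.
Qed.

Definition hfun (n : nat) (y u : R) : R := u ^ (2 * n + 1 - 1) * exp (y * u - u ^ 2 / 2).

Lemma h_cont n y x : continuous (hfun n y) x.
Proof. apply (ex_derive_continuous (K:=R_AbsRing) (V:=R_NormedModule)). unfold hfun. auto_derive. auto. Qed.

Lemma h_lim n y : filterlim (fun M => RInt (hfun n y) 0 M) (Rbar_locally p_infty) (locally (Fexpr n y)).
Proof.
  eapply filterlim_ext. { intros M. symmetry. apply RInt_h. }
  unfold Fexpr.
  assert (H : is_lim (fun M => exp (y ^ 2 / 2) * sum_f_R0 (fun k => Binomial.C (2 * n) k * y ^ (2 * n - k) *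
    (RInt (phi k) 0 (M - y) - RInt (phi k) 0 (- y))) (2 * n)) p_infty
    (exp (y ^ 2 / 2) * sum_f_R0 (fun k => Binomial.C (2 * n) k * y ^ (2 * n - k) *
    (Ck k - RInt (phi k) 0 (- y))) (2 * n))).
  { apply (is_lim_scal_l _ (exp (y ^ 2 / 2)) p_infty (Finite _)).
    apply is_lim_sum. intros k.
    apply (is_lim_scal_l _ _ p_infty (Finite _)).
    apply is_lim_minus'; [|apply is_lim_const].
    unfold is_lim. eapply filterlim_comp; [|apply Ck_spec].
    intros P [N HN]. exists (N + y). intros x Hx. apply HN. lra. }
  exact H.
Qed.

Lemma Fq_eq' n y : Fq (2 * n + 1) y = Fexpr n y.
Proof.
  unfold Fq. apply is_RInt_gen_unique. apply gen_of_lim.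
  - intros b. apply (ex_RInt_continuous (V:=R_CompleteNormedModule)). intros z _. apply h_cont.
  - apply h_lim.
Qed.

Lemma Fexpr_pos n y : 0 < Fexpr n y.
Proof.
  assert (H1 : 0 < RInt (hfun n y) 0 1).
  { apply RInt_gt_0. lra. intros x Hx. unfold hfun. apply Rmult_lt_0_compat.
    apply pow_lt; lra. apply exp_pos. intros; apply h_cont. }
  assert (H2 : Rbar_le (RInt (hfun n y) 0 1) (Fexpr n y)).
  { apply (is_lim_le_loc (fun _ => RInt (hfun n y) 0 1) (fun M => RInt (hfun n y) 0 M) p_infty).
    - exists 1. intros M HM.
      rewrite <- (RInt_Chasles (hfun n y) 0 1 M).
      2,3: apply (ex_RInt_continuous (V:=R_CompleteNormedModule)); intros; apply h_cont.
      change (plus ?a ?b) with (a + b).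
      assert (0 <= RInt (hfun n y) 1 M).
      { apply RInt_ge_0. lra. apply (ex_RInt_continuous (V:=R_CompleteNormedModule)); intros; apply h_cont.
        intros x Hx. unfold hfun. apply Rmult_le_pos. apply pow_le; lra. left; apply exp_pos. }
      lra.
    - apply is_lim_const.
    - apply h_lim. }
  simpl in H2. lra.
Qed.

Definition C1 (f : R -> R) : Prop :=
  exists f' : R -> R, (forall x : R, is_derive f x (f' x)) /\ (forall x : R, continuous f' x).

Lemma C1_cont f : C1 f -> forall x, continuous f x.
Proof. intros [f' [H _]] x. apply (ex_derive_continuous (K:=R_AbsRing) (V:=R_NormedModule)). exists (f' x). apply H. Qed.

Lemma C1_ext f g : (forall x, f x = g x) -> C1 f -> C1 g.
Proof. intros He [f' [H1 H2]]. exists f'. split; auto. intros x. eapply is_derive_ext; eauto. Qed.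

Lemma C1_const c : C1 (fun _ => c).
Proof. exists (fun _ => 0). split. intros; auto_derive; auto. intros; apply continuous_const. Qed.

Lemma C1_id : C1 (fun x => x).
Proof. exists (fun _ => 1). split. intros; auto_derive; auto. intros; apply continuous_const. Qed.

Lemma C1_plus f g : C1 f -> C1 g -> C1 (fun x => f x + g x).
Proof.
  intros [f' [Hf Cf]] [g' [Hg Cg]]. exists (fun x => f' x + g' x). split.
  - intros x. apply (is_derive_plus f g); auto.
  - intros x. apply (continuous_plus f' g'); auto.
Qed.

Lemma C1_opp f : C1 f -> C1 (fun x => - f x).
Proof.
  intros [f' [Hf Cf]]. exists (fun x => - f' x). split.
  - intros x. apply (is_derive_opp f); auto.
  - intros x. apply (continuous_opp f'); auto.
Qed.

Lemma C1_minus f g : C1 f -> C1 g -> C1 (fun x => f x - g x).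
Proof. intros. apply C1_plus; auto. now apply C1_opp. Qed.

Lemma C1_mult f g : C1 f -> C1 g -> C1 (fun x => f x * g x).
Proof.
  intros Cf0 Cg0. pose proof (C1_cont _ Cf0) as Kf. pose proof (C1_cont _ Cg0) as Kg.
  destruct Cf0 as [f' [Hf Cf]], Cg0 as [g' [Hg Cg]].
  exists (fun x => f' x * g x + f x * g' x). split.
  - intros x. apply (is_derive_mult f g); auto. intros; apply Rmult_comm.
  - intros x. apply (continuous_plus (fun x => f' x * g x) (fun x => f x * g' x)).
    + apply (continuous_mult f' g); auto.
    + apply (continuous_mult f g'); auto.
Qed.

Lemma C1_comp f g : C1 f -> C1 g -> C1 (fun x => f (g x)).
Proof.
  intros Cf0 Cg0. pose proof (C1_cont _ Cg0) as Kg.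
  destruct Cf0 as [f' [Hf Cf]], Cg0 as [g' [Hg Cg]].
  exists (fun x => g' x * f' (g x)). split.
  - intros x. apply (is_derive_comp f g); auto.
  - intros x. apply (continuous_mult g' (fun x => f' (g x))); auto.
    apply (continuous_comp g f'); auto.
Qed.

Lemma C1_pow p : C1 (fun x => x ^ p).
Proof.
  induction p as [|p IH].
  - apply (C1_ext (fun _ => 1)); [intros; simpl; reflexivity| apply C1_const].
  - apply (C1_mult (fun x => x) (fun x => x ^ p)); auto. apply C1_id.
Qed.

Lemma C1_exp : C1 exp.
Proof.
  exists exp. split. intros; auto_derive; auto; ring.
  intros x. apply (ex_derive_continuous (K:=R_AbsRing) (V:=R_NormedModule)). auto_derive. auto.
Qed.

Lemma C1_RIntphi k : C1 (fun x => RInt (phi k) 0 x).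
Proof.
  exists (phi k). split.
  - intros x. apply (is_derive_RInt (phi k) (fun b => RInt (phi k) 0 b) 0).
    + apply filter_forall. intros b. exact (RInt_correct (phi k) 0 b (phi_exRInt k 0 b)).
    + apply phi_cont.
  - apply phi_cont.
Qed.

Lemma C1_sum (f : nat -> R -> R) N : (forall k, C1 (f k)) -> C1 (fun x => sum_f_R0 (fun k => f k x) N).
Proof.
  intros H. induction N as [|N IH]; simpl.
  - apply (C1_ext (f 0%nat)); auto.
  - apply (C1_plus (fun x => sum_f_R0 (fun k => f k x) N) (f (S N))); auto.
Qed.

Lemma C1_Fexpr n : C1 (Fexpr n).
Proof.
  unfold Fexpr.
  apply (C1_mult (fun y => exp (y ^ 2 / 2))).
  - apply (C1_comp exp (fun y => y ^ 2 / 2)). apply C1_exp.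
    apply (C1_mult (fun y => y ^ 2) (fun _ => / 2)). apply C1_pow. apply C1_const.
  - apply (C1_sum (fun k y => Binomial.C (2 * n) k * y ^ (2 * n - k) * (Ck k - RInt (phi k) 0 (- y)))).
    intros k.
    apply (C1_mult (fun y => Binomial.C (2 * n) k * y ^ (2 * n - k))).
    + apply (C1_mult (fun _ => _)). apply C1_const. apply C1_pow.
    + apply (C1_minus (fun _ => _)). apply C1_const.
      apply (C1_comp (fun x => RInt (phi k) 0 x) (fun y => - y)). apply C1_RIntphi.
      apply C1_opp. apply C1_id.
Qed.

Lemma C1_F n : C1 (Fq (2 * n + 1)).
Proof. apply (C1_ext (Fexpr n)). intros; symmetry; apply Fq_eq'. apply C1_Fexpr. Qed.

Lemma F_pos n y : 0 < Fq (2 * n + 1) y.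
Proof. rewrite Fq_eq'. apply Fexpr_pos. Qed.

Lemma lim_side (f D : R -> R) (a : R) (F : (R -> Prop) -> Prop) {FF : Filter F} :
  filter_le F (locally a) -> F (fun x => D x = Derive f x) -> continuous D a ->
  filterlim (fun x => Derive f x) F (locally (D a)).
Proof.
  intros Hle HF Hc. apply (filterlim_ext_loc D); auto.
  apply (filterlim_filter_le_1 (F := locally a)); auto.
Qed.

Lemma derive_loc (f f1 : R -> R) (d x : R) :
  locally x (fun y => f y = f1 y) -> is_derive f1 x d -> Derive f x = d.
Proof. intros H1 H2. rewrite (Derive_ext_loc f f1 x H1). now apply is_derive_unique. Qed.

Lemma loc_abs x b : Rabs x < b -> locally x (fun y => Rabs y < b).
Proof.
  intros H. assert (Hp : 0 < b - Rabs x) by lra.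
  exists (mkposreal _ Hp). intros y Hy. change (Rabs (y - x) < b - Rabs x) in Hy.
  pose proof (Rabs_triang_inv y x). lra.
Qed.

Lemma loc_pos x : 0 < x -> locally x (fun y => 0 < y).
Proof.
  intros H. exists (mkposreal _ H). intros y Hy. change (Rabs (y - x) < x) in Hy.
  apply Rabs_lt_between' in Hy. lra.
Qed.

Lemma loc_neg x : x < 0 -> locally x (fun y => y < 0).
Proof.
  intros H. assert (Hp : 0 < - x) by lra. exists (mkposreal _ Hp). intros y Hy. change (Rabs (y - x) < - x) in Hy.
  apply Rabs_lt_between' in Hy. lra.
Qed.

Lemma cont_Fd_comp (Fd : R -> R) (a : R) (x : R) :
  (forall z, continuous Fd z) -> continuous (fun y => Fd (a * y)) x.
Proof.
  intros H. apply (continuous_comp (fun y => a * y) Fd). 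
  apply (ex_derive_continuous (K:=R_AbsRing) (V:=R_NormedModule)). auto_derive. auto. apply H.
Qed.

Lemma Rc_const (a x : R) : continuous (fun _ : R => a) x.
Proof. apply continuous_const. Qed.
Lemma Rc_plus (f g : R -> R) x : continuous f x -> continuous g x -> continuous (fun y => f y + g y) x.
Proof. intros; apply (continuous_plus f g); auto. Qed.
Lemma Rc_mult (f g : R -> R) x : continuous f x -> continuous g x -> continuous (fun y => f y * g y) x.
Proof. intros; apply (continuous_mult f g); auto. Qed.
Lemma Rc_opp (f : R -> R) x : continuous f x -> continuous (fun y => - f y) x.
Proof. intros; apply (continuous_opp f); auto. Qed.
Lemma Rc_minus (f g : R -> R) x : continuous f x -> continuous g x -> continuous (fun y => f y - g y) x.
Proof. intros. apply (Rc_plus f (fun y => - g y)); auto. apply Rc_opp; auto. Qed.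
Lemma Rc_pow p x : continuous (fun y : R => y ^ p) x.
Proof. apply (ex_derive_continuous (K:=R_AbsRing) (V:=R_NormedModule)). auto_derive. auto. Qed.

Theorem lemma4p5 (n : nat) (Bs : R)
  (hBpos : 0 < Bs) (hBzero : Bstar_eq n Bs = 0)
  (hBuniq : forall B, 0 < B -> Bstar_eq n B = 0 -> B = Bs)
  (t : R) (ht0 : 0 <= t) (ht1 : t < 1) :
  (exists L : R,
     filterlim (fun x => Derive (Jstar n Bs t) x)
       (at_left (Bs * sqrt (1 - t))) (locally L) /\
     filterlim (fun x => Derive (g n Bs t) x)
       (at_right (Bs * sqrt (1 - t))) (locally L)) /\
  (exists L : R,
     filterlim (fun x => Derive (Jstar n Bs t) x)
       (at_right (- (Bs * sqrt (1 - t)))) (locally L) /\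
     filterlim (fun x => Derive (g n Bs t) x)
       (at_left (- (Bs * sqrt (1 - t)))) (locally L)).
Proof.
  destruct (C1_F n) as [Fd [HFd CFd]].
  pose proof (F_pos n) as HF0.
  assert (Hs : 0 < sqrt (1 - t)) by (apply sqrt_lt_R0; lra).
  assert (Hc : Rpower (1 - t) (INR n + / 2) = sqrt (1 - t) ^ (2 * n) * sqrt (1 - t)).
  { rewrite Rpower_plus, Rpower_pow, Rpower_sqrt by lra. rewrite pow_mult. replace (sqrt (1 - t) ^ 2) with (1 - t). reflexivity. simpl; rewrite Rmult_1_r, sqrt_sqrt; lra. }
  assert (Hj : j n Bs Bs = Bs ^ (2 * n + 1) / Fq (2 * n + 1) Bs).
  { unfold j, Gq. pose proof (HF0 Bs). pose proof (HF0 (- Bs)). field. lra. }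
  assert (HB : Bs * Fd Bs / Fq (2 * n + 1) Bs = INR (2 * n + 1)).
  { unfold Bstar_eq in hBzero. rewrite (is_derive_unique _ _ _ (HFd Bs)) in hBzero. lra. }
  set (s := sqrt (1 - t)) in *.
  set (c := Rpower (1 - t) (INR n + / 2)) in *.
  set (jB := j n Bs Bs) in *.
  set (F := Fq (2 * n + 1)) in *.
  assert (HD : forall y, Derive (fun x0 : R => F x0) y = Fd y).
  { intros y. apply is_derive_unique. apply HFd. }
  assert (HJ1 : forall x, is_derive (fun x => c * (F (x / s) + Gq (2 * n + 1) (x / s)) * jB) x
     (c * jB / s * (Fd (/ s * x) - Fd (- / s * x)))).
  { intros x. unfold Gq. fold F. auto_derive.
    - split; [exists (Fd (x * / s)); apply HFd|]. split; auto. exists (Fd (- (x * / s))); apply HFd.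
    - rewrite !HD.
      replace (/ s * x) with (x * / s) by ring. replace (- / s * x) with (- (x * / s)) by ring.
      field. lra. }
  assert (HG1 : forall x, is_derive (fun x => c * Bs ^ (2 * n + 1) * F (- x / s) / F Bs + x ^ (2 * n + 1)) x
     (- (c / s * Bs ^ (2 * n + 1) / F Bs) * Fd (- / s * x) + INR (2 * n + 1) * x ^ (2 * n))).
  { intros x. auto_derive.
    - exists (Fd (- x * / s)); apply HFd.
    - rewrite !HD. replace (Init.Nat.pred (n + (n + 0) + 1)) with (2 * n)%nat by (simpl; lia).
      replace (n + (n + 0) + 1)%nat with (2 * n + 1)%nat by lia.
      replace (- / s * x) with (- x * / s) by ring. pose proof (HF0 Bs). field. lra. }
  assert (HG2 : forall x, is_derive (fun x => c * Bs ^ (2 * n + 1) * F (x / s) / F Bs - x ^ (2 * n + 1)) x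
     (c / s * Bs ^ (2 * n + 1) / F Bs * Fd (/ s * x) - INR (2 * n + 1) * x ^ (2 * n))).
  { intros x. auto_derive.
    - exists (Fd (x * / s)); apply HFd.
    - rewrite !HD. replace (Init.Nat.pred (n + (n + 0) + 1)) with (2 * n)%nat by (simpl; lia).
      replace (n + (n + 0) + 1)%nat with (2 * n + 1)%nat by lia.
      replace (/ s * x) with (x * / s) by ring. pose proof (HF0 Bs). field. lra. }
  assert (Hb : 0 < Bs * s) by (apply Rmult_lt_0_compat; lra).
  assert (EJ : forall x, Rabs x < Bs * s -> Jstar n Bs t x = c * (F (x / s) + Gq (2 * n + 1) (x / s)) * jB).
  { intros x Hx. unfold Jstar. destruct (Rlt_dec _ _) as [h|h]; [reflexivity| exfalso; apply h; exact Hx]. }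
  assert (EG1 : forall x, 0 < x -> g n Bs t x = c * Bs ^ (2 * n + 1) * F (- x / s) / F Bs + x ^ (2 * n + 1)).
  { intros x Hx. unfold g, U. destruct (Rle_dec x 0) as [h|h]; [lra|].
    destruct (Rlt_dec _ _) as [h2|h2]; [reflexivity| exfalso; apply h2; change (- x < Bs * s); lra]. }
  assert (EG2 : forall x, x < 0 -> g n Bs t x = c * Bs ^ (2 * n + 1) * F (x / s) / F Bs - x ^ (2 * n + 1)).
  { intros x Hx. unfold g, U. destruct (Rle_dec x 0) as [h|h]; [|lra].
    destruct (Rlt_dec _ _) as [h2|h2]; [reflexivity| exfalso; apply h2; change (x < Bs * s); lra]. }
  set (D1 := fun x => c * jB / s * (Fd (/ s * x) - Fd (- / s * x))).
  set (D2 := fun x => - (c / s * Bs ^ (2 * n + 1) / F Bs) * Fd (- / s * x) + INR (2 * n + 1) * x ^ (2 * n)).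
  set (D3 := fun x => c / s * Bs ^ (2 * n + 1) / F Bs * Fd (/ s * x) - INR (2 * n + 1) * x ^ (2 * n)).
  assert (DJ : forall x, Rabs x < Bs * s -> Derive (Jstar n Bs t) x = D1 x).
  { intros x Hx. apply (derive_loc _ _ _ _ (filter_imp _ _ (fun y Hy => EJ y Hy) (loc_abs _ _ Hx))). apply HJ1. }
  assert (DG1 : forall x, 0 < x -> Derive (g n Bs t) x = D2 x).
  { intros x Hx. apply (derive_loc _ _ _ _ (filter_imp _ _ (fun y Hy => EG1 y Hy) (loc_pos _ Hx))). apply HG1. }
  assert (DG2 : forall x, x < 0 -> Derive (g n Bs t) x = D3 x).
  { intros x Hx. apply (derive_loc _ _ _ _ (filter_imp _ _ (fun y Hy => EG2 y Hy) (loc_neg _ Hx))). apply HG2. }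
  assert (CD1 : forall x, continuous D1 x).
  { intros x. unfold D1. apply (Rc_mult (fun _ => _)). apply Rc_const.
    apply (Rc_minus (fun y => Fd (/ s * y)) (fun y => Fd (- / s * y))); apply cont_Fd_comp; auto. }
  assert (CD2 : forall x, continuous D2 x).
  { intros x. unfold D2. apply (Rc_plus (fun y => _ * Fd (- / s * y)) (fun y => _ * y ^ (2 * n))).
    apply (Rc_mult (fun _ => _)). apply Rc_const. apply cont_Fd_comp; auto.
    apply (Rc_mult (fun _ => _)). apply Rc_const. apply Rc_pow. }
  assert (CD3 : forall x, continuous D3 x).
  { intros x. unfold D3. apply (Rc_minus (fun y => _ * Fd (/ s * y)) (fun y => _ * y ^ (2 * n))).
    apply (Rc_mult (fun _ => _)). apply Rc_const. apply cont_Fd_comp; auto.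
    apply (Rc_mult (fun _ => _)). apply Rc_const. apply Rc_pow. }
  assert (HFdB : Fd Bs = INR (2 * n + 1) * F Bs / Bs).
  { rewrite <- HB. pose proof (HF0 Bs). field. lra. }
  assert (E1 : D1 (Bs * s) = D2 (Bs * s)).
  { unfold D1, D2. replace (/ s * (Bs * s)) with Bs by (field; lra).
    replace (- / s * (Bs * s)) with (- Bs) by (field; lra).
    rewrite Hj, Hc, HFdB, Rpow_mult_distr, pow_add. pose proof (HF0 Bs). simpl (Bs ^ 1). field. lra. }
  assert (E2 : D1 (- (Bs * s)) = D3 (- (Bs * s))).
  { unfold D1, D3. replace (/ s * - (Bs * s)) with (- Bs) by (field; lra).
    replace (- / s * - (Bs * s)) with Bs by (field; lra).
    replace ((- (Bs * s)) ^ (2 * n)) with ((Bs * s) ^ (2 * n)) by (rewrite !pow_mult; f_equal; ring).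
    rewrite Hj, Hc, HFdB, Rpow_mult_distr, pow_add. pose proof (HF0 Bs). simpl (Bs ^ 1). field. lra. }
  split.
  - exists (D1 (Bs * s)). split.
    + refine (lim_side _ D1 _ _ _ _ _); [apply filter_le_within| |apply CD1].
      exists (mkposreal _ Hb). intros y Hy Hlt. change (Rabs (y - Bs * s) < Bs * s) in Hy.
      apply Rabs_lt_between' in Hy. symmetry. apply DJ. apply Rabs_def1; lra.
    + rewrite E1. refine (lim_side _ D2 _ _ _ _ _); [apply filter_le_within| |apply CD2].
      exists (mkposreal _ Hb). intros y Hy Hlt. simpl in Hlt. symmetry. apply DG1. lra.
  - exists (D1 (- (Bs * s))). split.
    + refine (lim_side _ D1 _ _ _ _ _); [apply filter_le_within| |apply CD1].
      exists (mkposreal _ Hb). intros y Hy Hlt. change (Rabs (y - - (Bs * s)) < Bs * s) in Hy.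
      apply Rabs_lt_between' in Hy. symmetry. apply DJ. apply Rabs_def1; lra.
    + rewrite E2. refine (lim_side _ D3 _ _ _ _ _); [apply filter_le_within| |apply CD3].
      exists (mkposreal _ Hb). intros y Hy Hlt. simpl in Hlt. symmetry. apply DG2. lra.
Qed.
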